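(* Let $X$ be a geodesic metric space, $Y$ a quasi-geodesic metric space and $f:Y\to X$ a quasi-isometric embedding. Then $Y$ is stable in $X$ in the sense of Durham--Taylor if and only if $f(Y)$ is $N$-stable as a subspace of $X$ for some Morse gauge $N$.
   Context: $Y$ is quasi-geodesic if there are $K\ge1,C\ge0$ such that any two points of $Y$ are joined by a $(K,C)$-quasi-geodesic in $Y$. $Y$ is stable in $X$ in the sense of Durham--Taylor (with respect to $f$) if for all $K,C$ there is $R=R(K,C)$ such that any two $(K,C)$-quasi-geodesics in $X$ with common endpoints in $f(Y)$ are at Hausdorff distance less than $R$. A Morse gauge is a function $N$ assigning to each $(K,C)$ a number $N(K,C)\ge0$; a geodesic $\gamma$ is $N$-Morse if every $(K,C)$-quasi-geodesic with endpoints on $\gamma$ lies in the $N(K,C)$-neighbourhood of $\gamma$. A subset $Z\subseteq X$ is $N$-stable if it is quasi-convex and any two points of $Z$ are joined by a geodesic of $X$ which is $N$-Morse. *)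

(* Defs.v *)
From Stdlib Require Import Reals.
Open Scope R_scope.

Record MetricSpace : Type := {
  mcarrier :> Type;
  dist : mcarrier -> mcarrier -> R;
  dist_refl : forall x, dist x x = 0;
  dist_eq0 : forall x y, dist x y = 0 -> x = y;
  dist_sym : forall x y, dist x y = dist y x;
  dist_tri : forall x y z, dist x z <= dist x y + dist y z
}.
Arguments dist {m} _ _.

(* A path  gamma : [a,b] -> M  is represented by a function R -> M together
   with its parameter interval [a,b] (a <= b); only values on [a,b] matter. *)

Definition is_quasi_geodesic {M : MetricSpace} (K C : R) (gamma : R -> M)
  (a b : R) : Prop :=
  a <= b /\
  forall s t, a <= s <= b -> a <= t <= b ->
    / K * Rabs (s - t) - C <= dist (gamma s) (gamma t) /\
    dist (gamma s) (gamma t) <= K * Rabs (s - t) + C.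

Definition is_geodesic {M : MetricSpace} (gamma : R -> M) (a b : R) : Prop :=
  a <= b /\
  forall s t, a <= s <= b -> a <= t <= b ->
    dist (gamma s) (gamma t) = Rabs (s - t).

Definition joins {M : MetricSpace} (gamma : R -> M) (a b : R) (x y : M) : Prop :=
  gamma a = x /\ gamma b = y.

Definition path_image {M : MetricSpace} (gamma : R -> M) (a b : R) (p : M) : Prop :=
  exists t, a <= t <= b /\ gamma t = p.

Definition geodesic_space (X : MetricSpace) : Prop :=
  forall x y : X, exists gamma a b, is_geodesic gamma a b /\ joins gamma a b x y.

Definition quasi_geodesic_space (Y : MetricSpace) : Prop :=
  exists K C, 1 <= K /\ 0 <= C /\
    forall x y : Y, exists gamma a b,
      is_quasi_geodesic K C gamma a b /\ joins gamma a b x y.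

Definition qi_embedding {Y X : MetricSpace} (f : Y -> X) : Prop :=
  exists L E, 1 <= L /\ 0 <= E /\
    forall y y' : Y,
      / L * dist y y' - E <= dist (f y) (f y') /\
      dist (f y) (f y') <= L * dist y y' + E.

Definition in_nbhd {M : MetricSpace} (A B : M -> Prop) (r : R) : Prop :=
  forall p, A p -> exists q, B q /\ dist p q <= r.

(* Hausdorff distance between A and B is less than R0:
   inf { r | A in N_r(B) and B in N_r(A) } < R0. *)
Definition hausdorff_lt {M : MetricSpace} (A B : M -> Prop) (R0 : R) : Prop :=
  exists r, r < R0 /\ in_nbhd A B r /\ in_nbhd B A r.

Definition image {Y X : Type} (f : Y -> X) (p : X) : Prop :=
  exists y, f y = p.

Definition DT_stable {Y X : MetricSpace} (f : Y -> X) : Prop :=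
  forall K C, 1 <= K -> 0 <= C ->
    exists R0, forall (x y : X) g1 a1 b1 g2 a2 b2,
      image f x -> image f y ->
      is_quasi_geodesic K C g1 a1 b1 -> joins g1 a1 b1 x y ->
      is_quasi_geodesic K C g2 a2 b2 -> joins g2 a2 b2 x y ->
      hausdorff_lt (path_image g1 a1 b1) (path_image g2 a2 b2) R0.

Definition morse_gauge (N : R -> R -> R) : Prop :=
  forall K C, 1 <= K -> 0 <= C -> 0 <= N K C.

Definition is_N_Morse {X : MetricSpace} (N : R -> R -> R) (gamma : R -> X)
  (a b : R) : Prop :=
  forall K C, 1 <= K -> 0 <= C ->
    forall q s t, is_quasi_geodesic K C q s t ->
      path_image gamma a b (q s) -> path_image gamma a b (q t) ->
      in_nbhd (path_image q s t) (path_image gamma a b) (N K C).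

Definition quasi_convex {X : MetricSpace} (Z : X -> Prop) : Prop :=
  exists Q, 0 <= Q /\
    forall x y gamma a b, Z x -> Z y -> is_geodesic gamma a b ->
      joins gamma a b x y -> in_nbhd (path_image gamma a b) Z Q.

Definition N_stable {X : MetricSpace} (N : R -> R -> R) (Z : X -> Prop) : Prop :=
  quasi_convex Z /\
  forall x y, Z x -> Z y ->
    exists gamma a b, is_geodesic gamma a b /\ joins gamma a b x y /\
      is_N_Morse N gamma a b.

(* Main.v *)
Require Import Defs.
From Stdlib Require Import Reals Lra Psatz Classical ClassicalEpsilon.
Open Scope R_scope.
Local Notation dist := Defs.dist.
Local Notation dist_refl := Defs.dist_refl.
Local Notation dist_sym := (Defs.dist_sym _).
Local Notation dist_tri := (Defs.dist_tri _).

Lemma geo_dist {M : MetricSpace} (g : R -> M) a b s t :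
  is_geodesic g a b -> a <= s <= b -> a <= t <= b -> dist (g s) (g t) = Rabs (s - t).
Proof. intros [_ H] Hs Ht; apply H; auto. Qed.

Lemma geo_qg {M : MetricSpace} (g : R -> M) a b K C :
  is_geodesic g a b -> 1 <= K -> 0 <= C -> is_quasi_geodesic K C g a b.
Proof.
  intros [Hab H] HK HC; split; auto. intros s t Hs Ht. rewrite (H s t Hs Ht).
  pose proof (Rabs_pos (s - t)).
  assert (/ K <= 1). { rewrite <- Rinv_1. apply Rinv_le_contravar; lra. }
  assert (/K * Rabs (s-t) <= 1 * Rabs (s-t)) by (apply Rmult_le_compat_r; lra).
  split; nra.
Qed.

Lemma coarse {M : MetricSpace} (g q : R -> M) a b s t K C N :
  is_geodesic g a b -> is_quasi_geodesic K C q s t -> 1 <= K -> 0 <= C -> 0 <= N ->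
  q s = g a -> q t = g b ->
  in_nbhd (path_image q s t) (path_image g a b) N ->
  in_nbhd (path_image g a b) (path_image q s t) (3*N + K + C).
Proof.
  intros Hg [Hst Hq] HK HC HN Hqs Hqt Hn p [u [Hu Hp]]. subst p.
  destruct Hg as [Hab Hgd].
  set (gr := fun i : nat => Rmin t (s + INR i)).
  assert (Hgr : forall i, s <= gr i <= t).
  { intro i. unfold gr. pose proof (pos_INR i). unfold Rmin; destruct (Rle_dec t (s + INR i)); lra. }
  assert (Hstep : forall i, dist (q (gr i)) (q (gr (S i))) <= K + C).
  { intro i. destruct (Hq _ _ (Hgr i) (Hgr (S i))) as [_ H].
    assert (Rabs (gr i - gr (S i)) <= 1).
    { unfold gr. rewrite S_INR. pose proof (pos_INR i).
      unfold Rmin; destruct (Rle_dec t (s + INR i)); destruct (Rle_dec t (s + (INR i + 1)));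
      apply Rabs_le; lra. }
    nra. }
  set (P := fun z => exists v, a <= v <= u /\ dist z (g v) <= N).
  set (Qp := fun z => exists v, u <= v <= b /\ dist z (g v) <= N).
  assert (Hpq : forall i, P (q (gr i)) \/ Qp (q (gr i))).
  { intro i. destruct (Hn (q (gr i))) as [w [[v [Hv Hw]] Hd]].
    { exists (gr i); split; auto. }
    subst w. destruct (Rle_dec v u); [left|right]; exists v; split; auto; lra. }
  assert (Hind : forall k, (exists i, P (q (gr i)) /\ Qp (q (gr (S i)))) \/ P (q (gr k))).
  { induction k.
    - right. exists a. split; [lra|]. replace (gr 0%nat) with s.
      + rewrite Hqs, dist_refl. lra.
      + unfold gr. simpl. rewrite Rplus_0_r. unfold Rmin; destruct (Rle_dec t s); lra.
    - destruct IHk as [H|H]; [left; auto|].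
      destruct (Hpq (S k)) as [H'|H']; [right; auto|left; exists k; auto]. }
  destruct (INR_archimed 1 (t - s)) as [n Hnn]; [lra|].
  assert (Hgn : gr n = t). { unfold gr. unfold Rmin; destruct (Rle_dec t (s + INR n)); lra. }
  assert (key : forall z w v1 v2, a <= v1 <= u -> u <= v2 <= b ->
     dist z (g v1) <= N -> dist w (g v2) <= N -> dist z w <= K + C ->
     dist (g u) z <= 3*N + K + C).
  { intros z w v1 v2 Hv1 Hv2 H1 H2 H3.
    assert (dist (g v1) (g v2) <= dist (g v1) z + dist z w + dist w (g v2)).
    { eapply Rle_trans; [apply (dist_tri _ z)|].
      pose proof (dist_tri z w (g v2)). lra. }
    rewrite (Hgd v1 v2) in H by lra. rewrite Rabs_left1 in H by lra.
    rewrite dist_sym in H1.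
    assert (dist (g u) z <= dist (g u) (g v1) + dist (g v1) z) by apply dist_tri.
    rewrite (Hgd u v1) in H0 by lra. rewrite Rabs_right in H0 by lra. lra. }
  destruct (Hind n) as [[i [[v1 [Hv1 H1]] [v2 [Hv2 H2]]]] | [v1 [Hv1 H1]]].
  - exists (q (gr i)). split.
    + exists (gr i); auto.
    + eapply key; eauto.
  - exists (q t). split.
    + exists t; split; auto; lra.
    + rewrite Hgn in H1.
      apply (key (q t) (q t) v1 b); [lra|lra|exact H1|rewrite Hqt, dist_refl; lra|rewrite dist_refl; lra].
Qed.

Definition modp {M : MetricSpace} (F : M -> M) (g : R -> M) a b r :=
  if Req_dec_T r a then F (g a) else if Req_dec_T r b then F (g b) else g r.

Lemma modp_close {M : MetricSpace} (F : M -> M) g a b Q :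
  0 <= Q -> dist (g a) (F (g a)) <= Q -> dist (g b) (F (g b)) <= Q ->
  forall r, dist (g r) (modp F g a b r) <= Q.
Proof.
  intros HQ Ha Hb r. unfold modp.
  destruct (Req_dec_T r a); [subst; auto|].
  destruct (Req_dec_T r b); [subst; auto|]. rewrite dist_refl; auto.
Qed.

Lemma modp_qg {M : MetricSpace} (F : M -> M) g a b Q K C :
  0 <= Q -> dist (g a) (F (g a)) <= Q -> dist (g b) (F (g b)) <= Q ->
  is_quasi_geodesic K C g a b -> is_quasi_geodesic K (C + 2*Q) (modp F g a b) a b.
Proof.
  intros HQ Ha Hb [Hab Hq]. split; auto. intros s t Hs Ht.
  pose proof (modp_close F g a b Q HQ Ha Hb) as Hc.
  destruct (Hq s t Hs Ht) as [H1 H2].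
  set (m := modp F g a b) in *.
  pose proof (Hc s). pose proof (Hc t).
  pose proof (dist_tri (m s) (g s) (m t)). pose proof (dist_tri (g s) (g t) (m t)).
  pose proof (dist_tri (g s) (m s) (g t)). pose proof (dist_tri (m s) (m t) (g t)).
  rewrite (dist_sym (m s) (g s)) in *. rewrite (dist_sym (g t) (m t)) in *.
  split; lra.
Qed.

Lemma modp_joins {M : MetricSpace} (F : M -> M) g a b :
  joins (modp F g a b) a b (F (g a)) (F (g b)).
Proof.
  unfold joins, modp. split.
  - destruct (Req_dec_T a a); [auto|congruence].
  - destruct (Req_dec_T b a); [subst; auto|].
    destruct (Req_dec_T b b); [auto|congruence].
Qed.

Theorem lemma3p8 (X Y : MetricSpace) (f : Y -> X) :
  geodesic_space X -> quasi_geodesic_space Y -> qi_embedding f ->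
  (DT_stable f <-> exists N : R -> R -> R, morse_gauge N /\ N_stable N (image f)).
Proof.
  intros HX HY Hf. split.
  - intros HDT.
    destruct HY as [K0 [C0 [HK0 [HC0 HcY]]]].
    destruct Hf as [L [E [HL [HE Hfe]]]].
    assert (Hqc : quasi_convex (image f)).
    { assert (HK1 : 1 <= L * K0) by nra.
      assert (HC1 : 0 <= L * C0 + E) by nra.
      destruct (HDT _ _ HK1 HC1) as [R1 HR1].
      exists (Rmax 0 R1). split; [apply Rmax_l|].
      intros x y g a b [y0 Hy0] [y1 Hy1] Hg Hj.
      destruct (HcY y0 y1) as [c [a' [b' [[Hab' Hc] [Hc0 Hc1]]]]].
      assert (Hfc : is_quasi_geodesic (L*K0) (L*C0+E) (fun r => f (c r)) a' b').
      { split; auto. intros s t Hs Ht. destruct (Hc s t Hs Ht) as [H1 H2].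
        destruct (Hfe (c s) (c t)) as [H3 H4].
        assert (HiL : 0 < / L <= 1).
        { split; [apply Rinv_0_lt_compat; lra|]. rewrite <- Rinv_1. apply Rinv_le_contravar; lra. }
        assert (HiK : 0 < / K0) by (apply Rinv_0_lt_compat; lra).
        rewrite Rinv_mult. pose proof (Rabs_pos (s - t)).
        assert (/L * (/K0 * Rabs (s-t) - C0) <= / L * dist (c s) (c t))
          by (apply Rmult_le_compat_l; lra).
        assert (L * dist (c s) (c t) <= L * (K0 * Rabs (s - t) + C0))
          by (apply Rmult_le_compat_l; lra).
        assert (/L * C0 <= L * C0) by nra.
        split; nra. }
      assert (Hjc : joins (fun r => f (c r)) a' b' x y) by (unfold joins; rewrite Hc0, Hc1; auto).
      destruct (HR1 x y g a b (fun r => f (c r)) a' b' (ex_intro _ y0 Hy0) (ex_intro _ y1 Hy1)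
        (geo_qg g a b _ _ Hg HK1 HC1) Hj Hfc Hjc) as [r [Hr [Hn _]]].
      { intros p Hp. destruct (Hn p Hp) as [w [[t0 [Ht0 Hw]] Hd]].
        exists w. split; [exists (c t0); auto|].
        pose proof (Rmax_r 0 R1). lra. } }
    destruct Hqc as [Q [HQ HQc]].
    assert (Hch : forall K C, exists R0, 1 <= K -> 0 <= C ->
      forall (x y : X) g1 a1 b1 g2 a2 b2,
      image f x -> image f y ->
      is_quasi_geodesic K C g1 a1 b1 -> joins g1 a1 b1 x y ->
      is_quasi_geodesic K C g2 a2 b2 -> joins g2 a2 b2 x y ->
      hausdorff_lt (path_image g1 a1 b1) (path_image g2 a2 b2) R0).
    { intros K C. destruct (Rle_dec 1 K); [|exists 0; intros; lra].
      destruct (Rle_dec 0 C); [|exists 0; intros; lra].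
      destruct (HDT K C r r0) as [R0 H]. exists R0; auto. }
    set (R0f := fun K C => proj1_sig (constructive_indefinite_description _ (Hch K C))).
    assert (HR0 : forall K C, 1 <= K -> 0 <= C ->
      forall (x y : X) g1 a1 b1 g2 a2 b2,
      image f x -> image f y ->
      is_quasi_geodesic K C g1 a1 b1 -> joins g1 a1 b1 x y ->
      is_quasi_geodesic K C g2 a2 b2 -> joins g2 a2 b2 x y ->
      hausdorff_lt (path_image g1 a1 b1) (path_image g2 a2 b2) (R0f K C)).
    { intros K C. exact (proj2_sig (constructive_indefinite_description _ (Hch K C))). }
    exists (fun K C => Rmax 0 (R0f K (C + 2*Q)) + 2*Q). split.
    { intros K C _ _. pose proof (Rmax_l 0 (R0f K (C + 2*Q))). lra. }
    split; [exists Q; split; auto|].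
    intros x y Hx Hy. destruct (HX x y) as [g [a [b [Hg Hj]]]].
    exists g, a, b. split; [auto|split; [auto|]].
    assert (HF : forall z, exists w, path_image g a b z -> image f w /\ dist z w <= Q).
    { intro z. destruct (classic (path_image g a b z)) as [Hz|Hz].
      - destruct (HQc x y g a b Hx Hy Hg Hj z Hz) as [w Hw]. exists w; auto.
      - exists z; intro; contradiction. }
    set (F := fun z => proj1_sig (constructive_indefinite_description _ (HF z))).
    assert (HFp : forall z, path_image g a b z -> image f (F z) /\ dist z (F z) <= Q).
    { intro z. exact (proj2_sig (constructive_indefinite_description _ (HF z))). }
    intros K C HK HC q s t Hq [u [Hu Hqs]] [v [Hv Hqt]].
    set (p := fun r => g (if Rle_dec u v then u + r else u - r)).
    set (d := Rabs (v - u)).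
    assert (Hpin : forall r, 0 <= r <= d -> a <= (if Rle_dec u v then u + r else u - r) <= b).
    { intros r Hr. unfold d in Hr. destruct (Rle_dec u v).
      - rewrite Rabs_right in Hr; lra.
      - rewrite Rabs_left in Hr; lra. }
    assert (Hpg : is_geodesic p 0 d).
    { split; [unfold d; apply Rabs_pos|]. intros r1 r2 H1 H2. unfold p.
      rewrite (geo_dist g a b) by auto using Hpin.
      destruct (Rle_dec u v).
      - f_equal; ring.
      - replace (u - r1 - (u - r2)) with (- (r1 - r2)) by ring. apply Rabs_Ropp. }
    assert (Hp0 : p 0 = q s).
    { unfold p. rewrite <- Hqs. f_equal. destruct (Rle_dec u v); ring. }
    assert (Hpd : p d = q t).
    { unfold p, d. rewrite <- Hqt. f_equal. destruct (Rle_dec u v).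
      - rewrite Rabs_right; lra.
      - rewrite Rabs_left; lra. }
    assert (Hqsi : path_image g a b (q s)) by (exists u; auto).
    assert (Hqti : path_image g a b (q t)) by (exists v; auto).
    destruct (HFp _ Hqsi) as [Fs1 Fs2]. destruct (HFp _ Hqti) as [Ft1 Ft2].
    assert (Hmq := modp_qg F q s t Q K C HQ Fs2 Ft2 Hq).
    assert (Hpqg : is_quasi_geodesic K C p 0 d) by (apply geo_qg; auto).
    rewrite <- Hp0 in Fs2. rewrite <- Hpd in Ft2.
    assert (Hmp := modp_qg F p 0 d Q K C HQ Fs2 Ft2 Hpqg).
    destruct (HR0 K (C + 2*Q) HK ltac:(lra) (F (q s)) (F (q t))
      (modp F q s t) s t (modp F p 0 d) 0 d Fs1 Ft1 Hmq (modp_joins F q s t) Hmp)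
      as [r [Hr [Hn _]]].
    { pose proof (modp_joins F p 0 d). rewrite Hp0, Hpd in H. exact H. }
    intros z [r0 [Hr0 Hz]]. subst z.
    destruct (Hn (modp F q s t r0)) as [w [[r1 [Hr1 Hw]] Hd]]; [exists r0; auto|].
    subst w. exists (p r1). split.
    + exists (if Rle_dec u v then u + r1 else u - r1). split; auto.
    + pose proof (modp_close F p 0 d Q HQ Fs2 Ft2 r1) as Cp.
      rewrite Hp0 in Fs2. rewrite Hpd in Ft2.
      pose proof (modp_close F q s t Q HQ Fs2 Ft2 r0) as Cq.
      pose proof (dist_tri (q r0) (modp F q s t r0) (p r1)).
      pose proof (dist_tri (modp F q s t r0) (modp F p 0 d r1) (p r1)).
      rewrite (dist_sym (modp F p 0 d r1) (p r1)) in H0.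
      pose proof (Rmax_r 0 (R0f K (C + 2*Q))). lra.
  - intros [N [HN [_ Hst]]] K C HK HC.
    set (M := 3 * N K C + K + C).
    exists (N K C + M + 1).
    intros x y g1 a1 b1 g2 a2 b2 Hx Hy Hq1 [H1a H1b] Hq2 [H2a H2b].
    destruct (Hst x y Hx Hy) as [g [a [b [Hg [[Hga Hgb] Hm]]]]].
    pose proof (HN K C HK HC) as HN0.
    assert (Hab : a <= b) by (destruct Hg; auto).
    assert (Hxi : forall gq aq bq, is_quasi_geodesic K C gq aq bq -> gq aq = x -> gq bq = y ->
      in_nbhd (path_image gq aq bq) (path_image g a b) (N K C) /\
      in_nbhd (path_image g a b) (path_image gq aq bq) M).
    { intros gq aq bq Hgq E1 E2.
      assert (Hn : in_nbhd (path_image gq aq bq) (path_image g a b) (N K C)).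
      { apply (Hm K C HK HC gq aq bq Hgq).
        - exists a; split; [lra|congruence].
        - exists b; split; [lra|congruence]. }
      split; auto. unfold M. apply (coarse g gq a b aq bq K C (N K C)); auto; congruence. }
    destruct (Hxi g1 a1 b1 Hq1 H1a H1b) as [A1 B1].
    destruct (Hxi g2 a2 b2 Hq2 H2a H2b) as [A2 B2].
    exists (N K C + M). split; [lra|].
    split.
    + intros z Hz. destruct (A1 z Hz) as [w [Hw Hd]]. destruct (B2 w Hw) as [w' [Hw' Hd']].
      exists w'. split; auto. pose proof (dist_tri z w w'). lra.
    + intros z Hz. destruct (A2 z Hz) as [w [Hw Hd]]. destruct (B1 w Hw) as [w' [Hw' Hd']].
      exists w'. split; auto. pose proof (dist_tri z w w'). lra.
Qed.
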